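(* Let $T=(V_T,E_T)$ be a finite tree, $r\in V_T$, and $Q\subseteq V_T$ non-empty. Root $T$ at $r$, let $V_Q$ be the set of nodes whose subtree contains a node of $Q$, $T_Q$ the subtree induced by $V_Q$, $A_Q=\{u\in V_Q:\deg_{T_Q}(u)\ge 3\}$ and $Q'=Q\cup A_Q$. Let $Z=(V_Z,E_Z)$ be a connected subgraph of $T$ with $Q'\cap V_Z\ne\emptyset$. Then $Z$ has one or two $(Q'\cap V_Z)$-centroids.
   Context: For a tree $Z$ and a set $Q\subseteq V_Z$, a node $u\in Q$ is a $Q$-centroid of $Z$ if every connected component of $Z-u$ contains at most $|Q|/2$ nodes of $Q$. *)

(* Defs.v *)
From mathcomp Require Import all_boot.
From Stdlib Require Import ClassicalEpsilon.
Set Implicit Arguments. Unset Strict Implicit. Unset Printing Implicit Defensive.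

Definition pb (P : Prop) : bool :=
  if excluded_middle_informative P then true else false.

Definition simple_graph (V : finType) (e : rel V) : Prop :=
  symmetric e /\ irreflexive e.

Definition acyclic (V : finType) (e : rel V) : Prop :=
  forall c : seq V, uniq c -> 3 <= size c -> ~~ cycle e c.

(* A finite tree: connected acyclic simple graph (with at least one vertex,
   which is implied by the root r below). *)
Definition is_tree (V : finType) (e : rel V) : Prop :=
  [/\ simple_graph e, (forall x y : V, connect e x y) & acyclic e].

(* u lies on the (unique) simple path from r to q, i.e. q is in the subtree
   of u when the tree is rooted at r. *)
Definition on_path (V : finType) (e : rel V) (r q u : V) : Prop :=
  exists p : seq V, [/\ path e r p, last r p = q, uniq (r :: p) & u \in r :: p].

Definition VQ (V : finType) (e : rel V) (r : V) (Q : {set V}) : {set V} :=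
  [set u | pb (exists2 q, q \in Q & on_path e r q u)].

Definition degTQ (V : finType) (e : rel V) (r : V) (Q : {set V}) (u : V) : nat :=
  #|[set v in VQ e r Q | e u v]|.

Definition AQ (V : finType) (e : rel V) (r : V) (Q : {set V}) : {set V} :=
  [set u in VQ e r Q | 3 <= degTQ e r Q u].

Definition Qprime (V : finType) (e : rel V) (r : V) (Q : {set V}) : {set V} :=
  Q :|: AQ e r Q.

Definition connected_subgraph (V : finType) (e : rel V) (VZ : {set V}) (eZ : rel V)
  : Prop :=
  [/\ symmetric eZ,
      (forall x y, eZ x y -> [&& e x y, x \in VZ & y \in VZ]) &
      (forall x y, x \in VZ -> y \in VZ -> connect eZ x y)].

Definition del_vertex (V : finType) (eZ : rel V) (u : V) : rel V :=
  [rel x y | [&& eZ x y, x != u & y != u]].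

Definition comp_del (V : finType) (VZ : {set V}) (eZ : rel V) (u w : V) : {set V} :=
  [set x in VZ :\ u | connect (del_vertex eZ u) w x].

Definition is_centroid (V : finType) (VZ : {set V}) (eZ : rel V) (QQ : {set V}) (u : V)
  : Prop :=
  u \in QQ /\
  forall w, w \in VZ :\ u -> 2 * #|comp_del VZ eZ u w :&: QQ| <= #|QQ|.

Definition centroids (V : finType) (VZ : {set V}) (eZ : rel V) (QQ : {set V}) : {set V} :=
  [set u | pb (is_centroid VZ eZ QQ u)].

(* Main.v *)
Require Import Defs.
From mathcomp Require Import all_boot.
From Stdlib Require Import ClassicalEpsilon.
Set Implicit Arguments. Unset Strict Implicit. Unset Printing Implicit Defensive.

From mathcomp Require Import zify.
Section Generic.
Variable V : finType.
Implicit Types (R : rel V) (a b c x y : V) (p : seq V).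

Lemma pbE (P : Prop) : pb P = true <-> P.
Proof. by rewrite /pb; case: excluded_middle_informative. Qed.

Lemma delE R c x y : del_vertex R c x y = [&& R x y, x != c & y != c].
Proof. by []. Qed.

Lemma del_sym R c : symmetric R -> symmetric (del_vertex R c).
Proof. by move=> HR x y; rewrite /del_vertex /= HR; congr (_ && _); exact: andbC. Qed.

Lemma connect_mono R R' : subrel R R' -> forall x y, connect R x y -> connect R' x y.
Proof.
move=> H x y /connectP[p Hp ->]; apply/connectP; exists p => //.
exact: sub_path H _ _ Hp.
Qed.

Lemma path_avoid R c a p : path R a p -> all (fun z => z != c) (a :: p) ->
  path (del_vertex R c) a p.
Proof.
elim: p a => [|y p IH] a //= /andP[Ray Hp] /and3P[Ha Hy Hall].
by rewrite delE Ray Ha Hy /= IH //= Hy.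
Qed.

Lemma path_del_all R c a p : path (del_vertex R c) a p -> all (fun z => z != c) p.
Proof.
elim: p a => [|y p IH] a //= /andP[]; rewrite delE => /and3P[_ _ Hy] Hp.
by rewrite Hy (IH y).
Qed.

Lemma path_del_sub R c a p : path (del_vertex R c) a p -> path R a p.
Proof. by apply: sub_path => x y; rewrite delE => /and3P[]. Qed.

Lemma connect_avoid R c a b p : path R a p -> all (fun z => z != c) (a :: p) ->
  b \in a :: p -> connect (del_vertex R c) a b.
Proof. move=> Hp Hall Hb; exact: (path_connect (path_avoid Hp Hall) Hb). Qed.

Lemma in_path_connect R a p y : path R a p -> y \in a :: p -> connect R y (last a p).
Proof.
elim: p a => [|z p IH] a /=.
  by move=> _; rewrite inE => /eqP ->.
move=> /andP[Raz Hp]; rewrite inE => /orP[/eqP->|Hy].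
  exact: (connect_trans (connect1 Raz) (path_connect Hp (mem_last z p))).
exact: IH.
Qed.

Lemma connect_del_out R c x : connect (del_vertex R c) c x -> x = c.
Proof.
move=> /connectP[[|y p]] /=; first by move=> _ ->.
by rewrite delE eqxx /= andbF.
Qed.

Lemma notin_all c s : c \notin s -> all (fun z => z != c) s.
Proof.
move=> Hc; apply/allP => z Hz; apply/eqP => Ez.
by rewrite -Ez Hz in Hc.
Qed.

Lemma step R u x : connect R u x -> u != x ->
  exists2 u1, R u u1 & connect (del_vertex R u) u1 x.
Proof.
move=> /connectP[p Hp ->]; case/shortenP: Hp => p' Hp' Hu _.
case: p' Hp' Hu => [|y p'] /=; first by rewrite eqxx.
move=> /andP[Ruy Hp'] /andP[Hu Huq] _.
exists y => //; apply: connect_avoid Hp' (notin_all Hu) (mem_last _ _).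
Qed.

Lemma cyc R c a b : symmetric R -> irreflexive R -> acyclic R ->
  R c a -> R c b -> a != b -> connect (del_vertex R c) a b -> False.
Proof.
move=> Hsym Hirr Hac Hca Hcb Hab /connectP[p Hp Eb]; subst b.
move: Hcb Hab; case/shortenP: Hp => p' Hp' Hu _ Hcb Hab.
have Hall := path_del_all Hp'.
have Hca' : c != a by apply/eqP => E; rewrite E Hirr in Hca.
apply: (negP (Hac (c :: a :: p') _ _)).
- rewrite /= in Hu *; rewrite Hu andbT inE negb_or Hca' /=.
  by apply/negP => /(allP Hall); rewrite eqxx.
- by case: p' Hp' Hu Hcb Hab Hall => [|y p''] //= _ _ _; rewrite eqxx.
- rewrite /= Hca /= rcons_path (path_del_sub Hp') /=.
  by rewrite Hsym.
Qed.

Lemma path_cut R c a p q : path R a p -> uniq (a :: p) -> q \in a :: p -> q != c ->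
  ~~ connect (del_vertex R c) a q ->
  exists m, [/\ R c m, m \in a :: p, c \in a :: p & connect (del_vertex R c) m q].
Proof.
elim: p a => [|y p IH] a /=.
  by move=> _ _; rewrite inE => /eqP -> _; rewrite connect0.
move=> /andP[Ray Hp] /andP[Ha Hu]; rewrite inE => /orP[/eqP ->|Hq] Hqc Hnc.
  by rewrite connect0 in Hnc.
have [Eac|Nac] := eqVneq a c.
  subst a; exists y; split=> //; rewrite ?inE ?eqxx ?orbT //.
  exact: connect_avoid Hp (notin_all Ha) Hq.
have Hny : ~~ connect (del_vertex R c) y q.
  have [Eyc|Nyc] := eqVneq y c.
    by subst y; apply/negP => /connect_del_out E; rewrite E eqxx in Hqc.
  apply: contra Hnc; apply: connect_trans; apply: connect1.
  by rewrite delE Ray Nac Nyc.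
have [m [H1 H2 H3 H4]] := IH y Hp Hu Hq Hqc Hny.
by exists m; split=> //; rewrite inE ?H2 ?H3 orbT.
Qed.

Lemma split_before R c a p : path R a p -> uniq (a :: p) -> c \in p ->
  exists2 m, R m c & (m \in a :: p) && connect (del_vertex R c) a m.
Proof.
elim: p a => [|y p IH] a //=.
move=> /andP[Ray Hp] /andP[Ha Hu]; rewrite inE => /orP[/eqP Ecy|Hc].
  by subst c; exists a => //; rewrite inE eqxx connect0.
have [m Rmc /andP[Hm Hcm]] := IH y Hp Hu Hc.
exists m => //; rewrite inE Hm orbT /=.
apply: connect_trans Hcm; apply: connect1; rewrite delE Ray.
have -> : a != c by apply/eqP => E; subst a; rewrite inE Hc orbT in Ha.
have -> // : y != c.
apply/eqP => E; subst y; move: Hu => /= /andP[/negP H _]; exact: H Hc.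
Qed.

End Generic.

Section Main.
Variables (V : finType) (e : rel V) (r : V) (Q : {set V}) (VZ : {set V}) (eZ : rel V).
Hypotheses (Hsym : symmetric e) (Hirr : irreflexive e) (Hac : acyclic e)
  (Hconn : forall x y, connect e x y)
  (HZsym : symmetric eZ) (HZe : forall x y, eZ x y -> [&& e x y, x \in VZ & y \in VZ])
  (HZc : forall x y, x \in VZ -> y \in VZ -> connect eZ x y).

Local Notation QQ := (Qprime e r Q :&: VZ).
Local Notation comp u w := (comp_del VZ eZ u w).
Local Notation Rz u := (del_vertex eZ u).
Local Notation Te u := (del_vertex e u).
Local Notation isC u := (is_centroid VZ eZ QQ u).

Lemma compE' u w x : (x \in comp u w) = [&& x != u, x \in VZ & connect (Rz u) w x].
Proof. by rewrite /comp_del !inE -andbA. Qed.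

Lemma Rz_Te u x y : connect (Rz u) x y -> connect (Te u) x y.
Proof.
apply: connect_mono => a b; rewrite !delE => /and3P[/HZe/and3P[-> _ _] -> ->].
by [].
Qed.

Lemma Rz_sym u : connect_sym (Rz u).
Proof. exact: sym_connect_sym (del_sym u HZsym). Qed.

Lemma Te_sym u : connect_sym (Te u).
Proof. exact: sym_connect_sym (del_sym u Hsym). Qed.

Lemma compE u a b : connect (Rz u) a b -> comp u a = comp u b.
Proof.
move=> H; apply/setP => x; rewrite !compE'.
by rewrite (same_connect (Rz_sym u) H).
Qed.

Lemma eZ_VZ x y : eZ x y -> (x \in VZ) && (y \in VZ).
Proof. by move/HZe/and3P=> [_ -> ->]. Qed.

Lemma eZ_e x y : eZ x y -> e x y.
Proof. by move/HZe/and3P=> [-> _ _]. Qed.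

Lemma QQ_VZ x : x \in QQ -> x \in VZ.
Proof. by case/setIP. Qed.

Lemma cover u v x : u \in VZ -> u != v -> x \in VZ -> x != u ->
  ~~ connect (Rz u) v x -> connect (Rz v) u x.
Proof.
move=> Hu Huv Hx Hxu Hn.
have Hux : u != x by rewrite eq_sym.
have [u1 Hu1 Hc] := step (HZc Hu Hx) Hux.
move: Hc => /connectP[p Hp Ex].
have Hall : all (fun z => z != v) (u1 :: p).
  apply/allP => z Hz; apply/eqP => Ez; subst z.
  by move: Hn; rewrite Ex (in_path_connect Hp Hz).
have H := connect_avoid Hp Hall (mem_last u1 p).
rewrite -Ex in H.
have H1 : Rz v u u1.
  by rewrite delE Hu1 Huv (allP Hall u1 (mem_head _ _)).
apply: (connect_trans (connect1 H1)).
apply: connect_mono H => a b; rewrite !delE => /and3P[/and3P[-> _ _] -> ->].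
by [].
Qed.

Lemma sides u v x : eZ u v -> x \in comp u v -> x \in comp v u -> False.
Proof.
move=> Huv; rewrite !compE' => /and3P[Hxu Hx Hvx] /and3P[Hxv _ Hux].
have Hux' : u != x by rewrite eq_sym.
have [u1 Hu1 Hc] := step Hux Hux'.
have H1 : connect (Rz u) u1 x.
  apply: connect_mono Hc => a b; rewrite !delE => /and3P[/and3P[-> _ _] -> ->].
  by [].
have H2 : connect (Rz u) u1 v by apply: (connect_trans H1); rewrite Rz_sym.
move: Hu1; rewrite delE => /and3P[Huu1 _ Hu1v].
exact: (cyc Hsym Hirr Hac (eZ_e Huu1) (eZ_e Huv) Hu1v (Rz_Te H2)).
Qed.

Lemma pair u v w : isC u -> isC v -> u != v -> w \in QQ -> w != u -> w != v ->
  connect (Rz u) v w -> connect (Rz v) u w -> False.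
Proof.
move=> [HuQ Hu] [HvQ Hv] Huv HwQ Hwu Hwv H1 H2.
have HuZ := QQ_VZ HuQ; have HvZ := QQ_VZ HvQ.
have HA := Hu v ltac:(by rewrite in_setD1 eq_sym Huv HvZ).
have HB := Hv u ltac:(by rewrite in_setD1 Huv HuZ).
have Hcov : QQ \subset comp u v :|: comp v u.
  apply/subsetP => x Hx; have HxZ := QQ_VZ Hx; rewrite in_setU !compE'.
  have [->|Hxu] := eqVneq x u; first by rewrite Huv HuZ connect0 orbT.
  have [Exv|Hxv] := eqVneq x v; first by rewrite Exv HvZ connect0.
  case: (boolP (connect (Rz u) v x)) => Hc; first by rewrite HxZ.
  by rewrite HxZ (cover HuZ Huv HxZ Hxu Hc) orbT.
have E : (comp u v :&: QQ) :&: (comp v u :&: QQ) = comp u v :&: comp v u :&: QQ.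
  apply/setP => x; rewrite !in_setI.
  by case: (x \in comp u v); case: (x \in comp v u); case: (x \in Qprime e r Q); case: (x \in VZ).
have HU := cardsU (comp u v :&: QQ) (comp v u :&: QQ).
rewrite E in HU.
have Hle : #|QQ| <= #|(comp u v :&: QQ) :|: (comp v u :&: QQ)|.
  apply: subset_leq_card; rewrite -setIUl; apply/subsetP => x Hx.
  by rewrite inE Hx (subsetP Hcov x Hx).
have Hpos : 0 < #|comp u v :&: comp v u :&: QQ|.
  apply/card_gt0P; exists w; rewrite in_setI HwQ andbT in_setI.
  rewrite !compE' in H1 H2 *.
  by rewrite Hwu Hwv (QQ_VZ HwQ) H1 H2.
have HW : 0 < #|QQ| by apply/card_gt0P; exists w.
move: HA HB HU Hle Hpos HW; set a := #|comp u v :&: QQ|; set b := #|comp v u :&: QQ|; set c := #|comp u v :&: comp v u :&: QQ|; set d := #|_ :|: _|; set W := #|QQ|. lia.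
Qed.

Lemma upper : #|[set u | pb (isC u)]| <= 2.
Proof.
rewrite leqNgt; apply/negP => /card_gt2P [u [v [w [[Hu Hv Hw] [Huv Hvw Hwu]]]]].
move: Hu Hv Hw; rewrite !inE => /pbE Hu /pbE Hv /pbE Hw.
have HuQ := Hu.1; have HvQ := Hv.1; have HwQ := Hw.1.
have HuZ := QQ_VZ HuQ; have HvZ := QQ_VZ HvQ; have HwZ := QQ_VZ HwQ.
have Hvu : v != u by rewrite eq_sym.
have Hwv : w != v by rewrite eq_sym.
have Huw : u != w by rewrite eq_sym.
case: (boolP (connect (Rz u) v w)) => Au.
  case: (boolP (connect (Rz v) u w)) => Av.
    exact: (pair Hu Hv Huv HwQ Hwu Hwv Au Av).
  have H : connect (Rz w) v u.
    apply: cover => //; by rewrite Rz_sym.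
  apply: (pair Hu Hw Huw HvQ Hvu Hvw); by rewrite Rz_sym.
have Av := cover HuZ Huv HwZ Hwu Au.
have Aw : connect (Rz w) u v.
  apply: cover => //; by rewrite Rz_sym.
apply: (pair Hv Hw Hvw HuQ Huv Huw); by rewrite Rz_sym.
Qed.


Lemma VQ_E u : (u \in VQ e r Q) = pb (exists2 q, q \in Q & on_path e r q u).
Proof. by rewrite /VQ inE. Qed.

Lemma QQ_VQ x : x \in QQ -> x \in VQ e r Q.
Proof.
case/setIP; rewrite /Qprime inE => /orP[HQ|HA] _.
  rewrite VQ_E; apply/pbE; exists x => //.
  have /connectP[p Hp Ex] := Hconn r x.
  move: Ex; case/shortenP: Hp => p' Hp' Hu _ Ex.
  by exists p'; split => //; rewrite Ex mem_last.
by move: HA; rewrite /AQ inE => /andP[].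
Qed.

Lemma down c n q q' : e c n -> connect (Te c) n q -> ~~ connect (Te c) n r ->
  q != c -> on_path e r q' q -> on_path e r q' c /\ on_path e r q' n.
Proof.
move=> Hcn Hnq Hnr Hqc [p [Hp Hl Hu Hq]].
have Hrq : ~~ connect (Te c) r q.
  apply: contra Hnr => Hrq; apply: (connect_trans Hnq); by rewrite Te_sym.
have [m [Hcm Hm Hc Hmq]] := path_cut Hp Hu Hq Hqc Hrq.
have Enm : n = m.
  apply/eqP; apply/negPn/negP => Hnm.
  apply: (cyc Hsym Hirr Hac Hcn Hcm Hnm).
  apply: (connect_trans Hnq); by rewrite Te_sym.
by split; exists p; split => //; rewrite Enm.
Qed.

Lemma up c n q' : e c n -> connect (Te c) n r -> on_path e r q' c -> on_path e r q' n.
Proof.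
move=> Hcn Hnr [p [Hp Hl Hu Hc]].
have Hcr : c != r.
  apply/eqP => E; subst c.
  move: Hnr; rewrite Te_sym => /connect_del_out E'.
  by rewrite E' Hirr in Hcn.
have Hcp : c \in p by move: Hc; rewrite inE (negPf Hcr).
have [m Hmc /andP[Hm Hrm]] := split_before Hp Hu Hcp.
have Enm : n = m.
  apply/eqP; apply/negPn/negP => Hnm.
  apply: (cyc Hsym Hirr Hac Hcn _ Hnm); first by rewrite Hsym.
  exact: (connect_trans Hnr Hrm).
by exists p; split => //; rewrite Enm.
Qed.

Lemma nVQ c n q : e c n -> connect (Te c) n q -> q \in VQ e r Q -> q != c ->
  (exists2 q', q' \in Q & on_path e r q' c) -> n \in VQ e r Q.
Proof.
move=> Hcn Hnq HqV Hqc [q' Hq' Hc]; rewrite VQ_E; apply/pbE.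
case: (boolP (connect (Te c) n r)) => Hnr.
  by exists q' => //; exact: up Hcn Hnr Hc.
move: HqV; rewrite VQ_E => /pbE [q'' Hq'' Hq].
by exists q'' => //; exact: (down Hcn Hnq Hnr Hqc Hq).2.
Qed.

Lemma cVQ c n q : e c n -> connect (Te c) n q -> q \in VQ e r Q -> q != c ->
  ~~ connect (Te c) n r -> exists2 q', q' \in Q & on_path e r q' c.
Proof.
move=> Hcn Hnq HqV Hqc Hnr.
move: HqV; rewrite VQ_E => /pbE [q'' Hq'' Hq].
by exists q'' => //; exact: (down Hcn Hnq Hnr Hqc Hq).1.
Qed.

Lemma nb v q : v \in VZ -> q \in VZ -> q != v -> exists2 n, eZ v n & connect (Rz v) n q.
Proof. move=> Hv Hq Hqv; apply: step (HZc Hv Hq) _; by rewrite eq_sym. Qed.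

Lemma sepT v n1 n2 q1 q2 : eZ v n1 -> eZ v n2 -> connect (Rz v) n1 q1 ->
  connect (Rz v) n2 q2 -> ~~ connect (Rz v) q1 q2 -> ~~ connect (Te v) n1 n2.
Proof.
move=> H1 H2 C1 C2 Hn; apply/negP => Ht.
have [E|Ne] := eqVneq n1 n2.
  move: Hn => /negP; apply; rewrite E in C1.
  apply: (connect_trans _ C2); by rewrite Rz_sym.
exact: (cyc Hsym Hirr Hac (eZ_e H1) (eZ_e H2) Ne Ht).
Qed.

Lemma KL v q1 q2 q3 : v \in VZ -> q1 \in QQ -> q2 \in QQ -> q3 \in QQ ->
  q1 != v -> q2 != v -> q3 != v ->
  ~~ connect (Rz v) q1 q2 -> ~~ connect (Rz v) q1 q3 -> ~~ connect (Rz v) q2 q3 ->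
  v \in QQ.
Proof.
move=> Hv H1 H2 H3 N1 N2 N3 S12 S13 S23.
have [n1 E1 C1] := nb Hv (QQ_VZ H1) N1.
have [n2 E2 C2] := nb Hv (QQ_VZ H2) N2.
have [n3 E3 C3] := nb Hv (QQ_VZ H3) N3.
have T12 := sepT E1 E2 C1 C2 S12.
have T13 := sepT E1 E3 C1 C3 S13.
have T23 := sepT E2 E3 C2 C3 S23.
have Hw : exists2 q', q' \in Q & on_path e r q' v.
  case: (boolP (connect (Te v) n1 r)) => R1.
    apply: (cVQ (eZ_e E2) (Rz_Te C2) (QQ_VQ H2) N2).
    apply: contra T12 => R2; apply: (connect_trans R1); by rewrite Te_sym.
  exact: (cVQ (eZ_e E1) (Rz_Te C1) (QQ_VQ H1) N1 R1).
have V1 := nVQ (eZ_e E1) (Rz_Te C1) (QQ_VQ H1) N1 Hw.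
have V2 := nVQ (eZ_e E2) (Rz_Te C2) (QQ_VQ H2) N2 Hw.
have V3 := nVQ (eZ_e E3) (Rz_Te C3) (QQ_VQ H3) N3 Hw.
have VV : v \in VQ e r Q by rewrite VQ_E; apply/pbE.
have D : 2 < degTQ e r Q v.
  apply/card_gt2P; exists n1, n2, n3; split.
    by split; rewrite in_set ?V1 ?V2 ?V3 /= eZ_e.
  split.
  - by apply: contraNneq T12 => ->; rewrite connect0.
  - by apply: contraNneq T23 => ->; rewrite connect0.
  - by apply: contraNneq T13 => ->; rewrite connect0.
rewrite in_setI Hv andbT /Qprime in_setU; apply/orP; right.
by rewrite /AQ inE VV.
Qed.

Lemma cnt_out (A : {set V}) : #|A :&: QQ| < #|QQ| -> exists2 q, q \in QQ & q \notin A.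
Proof.
move=> H; case: (boolP (QQ \subset A)) => Hs.
  have E : A :&: QQ = QQ by apply/setIidPr.
  by rewrite E ltnn in H.
by move/subsetPn: Hs.
Qed.

Lemma cnt_disj (A B : {set V}) : (forall x, x \in A -> x \in B -> False) ->
  #|A :&: QQ| + #|B :&: QQ| <= #|QQ|.
Proof.
move=> H.
have E : (A :&: QQ) :&: (B :&: QQ) = set0.
  apply/setP => x; rewrite in_set0; apply/negP => /setIP[/setIP[Ha _] /setIP[Hb _]].
  exact: H Ha Hb.
have := cardsU (A :&: QQ) (B :&: QQ); rewrite E cards0 subn0 => <-.
apply: subset_leq_card; apply/subsetP => x; rewrite in_setU.
by case/orP => /setIP[_ ->].
Qed.

Lemma cnt_out2 (A B : {set V}) : #|A :&: QQ| + #|B :&: QQ| < #|QQ| ->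
  exists2 q, q \in QQ & (q \notin A) && (q \notin B).
Proof.
move=> H.
have H' : #|(A :|: B) :&: QQ| < #|QQ|.
  rewrite setIUl; apply: leq_ltn_trans H.
  by rewrite cardsU leq_subr.
have [q Hq Hn] := cnt_out H'.
by exists q => //; move: Hn; rewrite in_setU negb_or.
Qed.

Lemma exists_step n : QQ != set0 -> forall u x, u \in VZ -> x \in VZ -> x != u ->
  #|QQ| <= 2 * #|comp u x :&: QQ| -> #|comp u x| <= n -> exists v, isC v.
Proof.
move=> HQQ; elim: n => [|n IH] u x Hu Hx Hxu Hheavy Hsz.
  have Hxin : x \in comp u x by rewrite compE' Hxu Hx connect0.
  have : 0 < #|comp u x| by apply/card_gt0P; exists x.
  lia.
have Hux : u != x by rewrite eq_sym.
have [v Huv Hvx] := step (HZc Hu Hx) Hux.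
have EC : comp u x = comp u v by apply: compE; rewrite Rz_sym.
rewrite EC in Hheavy Hsz.
have Hv : v \in VZ by case/andP: (eZ_VZ Huv).
have Hvu : v != u by apply/eqP => E; move: (eZ_e Huv); rewrite E Hirr.
have Huv' : u != v by rewrite eq_sym.
have HvC : v \in comp u v by rewrite compE' Hvu Hv connect0.
case: (boolP [exists y, [&& y \in VZ :\ v, #|QQ| <= 2 * #|comp v y :&: QQ| & u \notin comp v y]]).
  case/existsP => y /and3P[Hy Hyh Huy].
  move: (Hy); rewrite in_setD1 => /andP[Hyv HyZ].
  have Hsub : comp v y \subset comp u v :\ v.
    apply/subsetP => z; rewrite in_setD1 !compE' => /and3P[Hzv Hz Hyz].
    have Hzu : z != u.
      apply/eqP => E; subst z; move: Huy; rewrite compE' Huv' Hu /=.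
      by rewrite Hyz.
    rewrite Hzv Hzu Hz /=.
    apply/negPn/negP => Hn.
    have := cover Hu Huv' Hz Hzu Hn => Hc.
    move: Huy; rewrite compE' Huv' Hu /= => /negP; apply.
    apply: (connect_trans Hyz); by rewrite Rz_sym.
  have := subset_leq_card Hsub.
  have := cardsD1 v (comp u v); rewrite HvC add1n.
  move=> E1 E2.
  have Hs : #|comp v y| <= n by move: E1 E2 Hsz; clear; lia.
  exact: (IH v y Hv HyZ Hyv Hyh Hs).
rewrite negb_exists => /forallP Hno.
have Hdis : #|comp u v :&: QQ| + #|comp v u :&: QQ| <= #|QQ|.
  apply: cnt_disj => z; exact: sides Huv.
have Hlight : forall y, y \in VZ :\ v -> u \notin comp v y ->
    2 * #|comp v y :&: QQ| < #|QQ|.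
  move=> y Hy Huy; have := Hno y; rewrite Hy Huy /= andbT -ltnNge.
  by [].
have Hall : forall y, y \in VZ :\ v -> 2 * #|comp v y :&: QQ| <= #|QQ|.
  move=> y Hy; case: (boolP (u \in comp v y)) => Huy; last exact: ltnW (Hlight y Hy Huy).
  have E : comp v y = comp v u by apply: compE; move: Huy; rewrite compE' => /and3P[].
  rewrite E; move: Hdis Hheavy; clear; lia.
case: (boolP (v \in QQ)) => HvQ; first by exists v; split.
exfalso.
have HW : 0 < #|QQ| by rewrite card_gt0.
have [q1 Hq1] := set0Pn _ HQQ.
have Hq1v : q1 != v by apply: contraNneq HvQ => <-.
have Hq1Z := QQ_VZ Hq1.
have Hq1D : q1 \in VZ :\ v by rewrite in_setD1 Hq1v Hq1Z.
have L1 := Hall q1 Hq1D.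
have [q2 Hq2 Hn2] := @cnt_out (comp v q1) ltac:(move: L1 HW; clear; lia).
have Hq2v : q2 != v by apply: contraNneq HvQ => <-.
have Hq2Z := QQ_VZ Hq2.
have S12 : ~~ connect (Rz v) q1 q2.
  by apply: contra Hn2 => C; rewrite compE' Hq2v Hq2Z C.
have third : forall a b, a \in QQ -> b \in QQ -> ~~ connect (Rz v) a b ->
    u \notin comp v b -> False.
  move=> a b Ha Hb Sab Hub.
  have Hav : a != v by apply: contraNneq HvQ => <-.
  have Hbv : b != v by apply: contraNneq HvQ => <-.
  have La := Hall a ltac:(by rewrite in_setD1 Hav (QQ_VZ Ha)).
  have Lb := Hlight b ltac:(by rewrite in_setD1 Hbv (QQ_VZ Hb)) Hub.
  have [q3 Hq3 /andP[N1 N2]] := @cnt_out2 (comp v a) (comp v b) ltac:(move: La Lb; clear; lia).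
  have Hq3v : q3 != v by apply: contraNneq HvQ => <-.
  have Hq3Z := QQ_VZ Hq3.
  have S1 : ~~ connect (Rz v) a q3.
    by apply: contra N1 => C; rewrite compE' Hq3v Hq3Z C.
  have S2 : ~~ connect (Rz v) b q3.
    by apply: contra N2 => C; rewrite compE' Hq3v Hq3Z C.
  by move: HvQ; rewrite (KL Hv Ha Hb Hq3 Hav Hbv Hq3v Sab S1 S2).
case: (boolP (u \in comp v q2)) => Hu2; last exact: third q1 q2 Hq1 Hq2 S12 Hu2.
apply: (third q2 q1 Hq2 Hq1); first by rewrite Rz_sym.
apply/negP => Hu1; move/negP: S12; apply.
move: Hu1 Hu2; rewrite !compE' => /and3P[_ _ C1] /and3P[_ _ C2].
apply: (connect_trans C1); by rewrite Rz_sym.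
Qed.

Lemma lower : QQ != set0 -> exists v, isC v.
Proof.
move=> HQQ; have [q Hq] := set0Pn _ HQQ.
case: (boolP [forall w, (w \in VZ :\ q) ==> (2 * #|comp q w :&: QQ| <= #|QQ|)]) => H.
  by exists q; split => // w Hw; exact: (implyP (forallP H w) Hw).
move: H; rewrite negb_forall => /existsP [w]; rewrite negb_imply => /andP [Hw Hn].
rewrite -ltnNge in Hn.
move: (Hw); rewrite in_setD1 => /andP[Hwq HwZ].
apply: (@exists_step #|V| HQQ q w (QQ_VZ Hq) HwZ Hwq (ltnW Hn)).
exact: max_card.
Qed.

End Main.

Theorem mainTheorem7 (V : finType) (e : rel V) (r : V) (Q : {set V})
  (VZ : {set V}) (eZ : rel V) :
  is_tree e ->
  Q != set0 ->
  connected_subgraph e VZ eZ ->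
  Qprime e r Q :&: VZ != set0 ->
  1 <= #|centroids VZ eZ (Qprime e r Q :&: VZ)| <= 2.
Proof.
move=> [[Hsym Hirr] Hconn Hac] _ [HZsym HZe HZc] HQQ.
rewrite /centroids; apply/andP; split.
  have [v Hv] : exists v, is_centroid VZ eZ (Qprime e r Q :&: VZ) v.
    by apply: lower => //.
  by apply/card_gt0P; exists v; rewrite inE; apply/pbE.
by apply: upper => //.
Qed.
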